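(* Let $P_x$ be a category of partitions. Then: (1) if $p\in P_x(k,l)$ then $\bar p\in P_x(0,k+l)$; (2) if $p\in P_x$ has a block with $s$ elements, then $1_s\in P_x(0,s)$ or $\uparrow\otimes 1_s\in P_x(0,s+1)$; (3) if $p\in P(k,l)$ is such that for every block $b$ of $p$ one has $1_{|b|}\in P_x(0,|b|)$, then $p\in P_x(k,l)$.
   Context: For integers $k,l\ge0$, $P(k,l)$ is the set of partitions (decompositions into disjoint nonempty blocks) of a set consisting of $k$ upper points labelled $1,\dots,k$ and $l$ lower points labelled $1,\dots,l$, pictured with the upper points on a top row and the lower points on a bottom row. Tensor product: for $p\in P(k,l)$, $q\in P(k',l')$, $p\otimes q\in P(k+k',l+l')$ is obtained by placing $q$ to the right of $p$. Composition: for $p\in P(m,l)$ and $q\in P(k,m)$, $pq\in P(k,l)$ is obtained by placing $q$ above $p$, identifying the $m$ lower points of $q$ with the $m$ upper points of $p$, merging blocks connected through these middle points, and then deleting the middle points together with all blocks consisting only of middle points. Involution: $p^*\in P(l,k)$ is the upside-down reflection of $p\in P(k,l)$. Special partitions: $|\in P(1,1)$ (one block containing the upper and the lower point); the basic crossing in $P(2,2)$, with blocks $\{\text{upper }1,\text{lower }2\}$ and $\{\text{upper }2,\text{lower }1\}$; $\sqcap\in P(0,2)$ (one block containing both lower points); $\uparrow\in P(0,1)$ (the singleton). A category of partitions is a family of subsets $P_x(k,l)\subset P(k,l)$ ($k,l\ge0$) stable under tensor product, composition (whenever defined) and involution, and containing $|$, the basic crossing and $\sqcap$. For $s\ge1$,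 $1_s\in P(0,s)$ denotes the one-block partition of $s$ lower points. For $p\in P(k,l)$, $\bar p\in P(0,k+l)$ is obtained by rotating the upper points counterclockwise down to the bottom row: its lower points $1,\dots,k$ are the former upper points $k,k-1,\dots,1$ and its lower points $k+1,\dots,k+l$ are the former lower points $1,\dots,l$, the block structure being unchanged. *)

(* Defs.v *)
From HB Require Import structures.
From mathcomp Require Import all_boot.
Set Implicit Arguments. Unset Strict Implicit. Unset Printing Implicit Defensive.

(* Points: inl i = upper point i+1, inr j = lower point j+1 (0-based ordinals). *)
Definition pt (k l : nat) : finType := ('I_k + 'I_l)%type.

Definition ppart (k l : nat) := {set {set pt k l}}.

Definition is_part (k l : nat) (p : ppart k l) : bool := partition p [set: pt k l].

Definition map_blocks (aT rT : finType) (f : aT -> rT) (p : {set {set aT}})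
  : {set {set rT}} := [set f @: (B : {set aT}) | B in p].

Definition tens_l (k l k' l' : nat) (x : pt k l) : pt (k + k') (l + l') :=
  match x with inl i => inl (lshift k' i) | inr j => inr (lshift l' j) end.
Definition tens_r (k l k' l' : nat) (x : pt k' l') : pt (k + k') (l + l') :=
  match x with inl i => inl (rshift k i) | inr j => inr (rshift l j) end.
Definition tensor (k l k' l' : nat) (p : ppart k l) (q : ppart k' l')
  : ppart (k + k') (l + l') :=
  map_blocks (@tens_l k l k' l') p :|: map_blocks (@tens_r k l k' l') q.

Definition swap_pt (k l : nat) (x : pt k l) : pt l k :=
  match x with inl i => inr i | inr j => inl j end.
Definition invol (k l : nat) (p : ppart k l) : ppart l k :=
  map_blocks (@swap_pt k l) p.

(* Composition p q for p in P(m,l), q in P(k,m): q is placed above p.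
   Three rows: top ('I_k, upper points of q), middle ('I_m), bottom ('I_l,
   lower points of p). *)
Definition pt3 (k m l : nat) : finType := ('I_k + ('I_m + 'I_l))%type.
Definition emb_q (k m l : nat) (x : pt k m) : pt3 k m l :=
  match x with inl i => inl i | inr j => inr (inl j) end.
Definition emb_p (k m l : nat) (x : pt m l) : pt3 k m l :=
  match x with inl j => inr (inl j) | inr j => inr (inr j) end.
Definition emb_out (k m l : nat) (x : pt k l) : pt3 k m l :=
  match x with inl i => inl i | inr j => inr (inr j) end.
Definition glue_rel (k m l : nat) (p : ppart m l) (q : ppart k m) : rel (pt3 k m l) :=
  fun x y =>
    [exists B in map_blocks (@emb_p k m l) p :|: map_blocks (@emb_q k m l) q,
       (x \in B) && (y \in B)].
(* blocks of pq: the connected components (through middle points) restricted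
   to the top and bottom rows; purely-middle components are discarded. *)
Definition comp (k m l : nat) (p : ppart m l) (q : ppart k m) : ppart k l :=
  [set [set y : pt k l | connect (glue_rel p q) (emb_out m x) (emb_out m y)] | x : pt k l].

Definition idp : ppart 1 1 := [set setT].
Definition cross : ppart 2 2 :=
  [set [set (inl (ord0 : 'I_2) : pt 2 2); inr (ord_max : 'I_2)];
       [set (inl (ord_max : 'I_2) : pt 2 2); inr (ord0 : 'I_2)]].
Definition sqcap : ppart 0 2 := [set setT].
Definition uparrow : ppart 0 1 := [set setT].
(* 1_s : the one-block partition of s lower points (meaningful for s >= 1). *)
Definition one_s (s : nat) : ppart 0 s := [set setT].

(* Rotation p |-> bar p. Lower point i+1 (i < k) of bar p is former upper
   point k-i, i.e. 0-based upper index rev_ord i; lower point k+j+1 is former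
   lower point j+1. *)
Definition rot_pt (k l : nat) (x : pt k l) : pt 0 (k + l) :=
  match x with inl i => inr (lshift l (rev_ord i)) | inr j => inr (rshift k j) end.
Definition bar (k l : nat) (p : ppart k l) : ppart 0 (k + l) :=
  map_blocks (@rot_pt k l) p.

Record is_category (Px : forall k l : nat, ppart k l -> Prop) : Prop := {
  cat_sub : forall k l (p : ppart k l), Px k l p -> is_part p;
  cat_tensor : forall k l k' l' (p : ppart k l) (q : ppart k' l'),
      Px k l p -> Px k' l' q -> Px (k + k') (l + l') (tensor p q);
  cat_comp : forall k m l (p : ppart m l) (q : ppart k m),
      Px m l p -> Px k m q -> Px k l (comp p q);
  cat_invol : forall k l (p : ppart k l), Px k l p -> Px l k (invol p);
  cat_id : Px 1 1 idp;
  cat_cross : Px 2 2 cross;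
  cat_sqcap : Px 0 2 sqcap
}.

(* Main.v *)
Require Import Defs.
From mathcomp Require Import all_boot perm fingroup zify.
Set Implicit Arguments. Unset Strict Implicit. Unset Printing Implicit Defensive.
Notation pcomp := Defs.comp.


Lemma map_blocks_ext (aT rT : finType) (f g : aT -> rT) (p : {set {set aT}}) :
  f =1 g -> map_blocks f p = map_blocks g p.
Proof. move=> fg; apply: eq_imset => B; exact: eq_imset. Qed.

Lemma map_blocks_comp (aT bT cT : finType) (f : aT -> bT) (g : bT -> cT) (p : {set {set aT}}) :
  map_blocks (g \o f) p = map_blocks g (map_blocks f p).
Proof.
rewrite /map_blocks -imset_comp; apply: eq_imset => B /=; exact: imset_comp.
Qed.

Lemma map_blocks_id (aT : finType) (f : aT -> aT) (p : {set {set aT}}) : f =1 id -> map_blocks f p = p.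
Proof.
move=> fid; rewrite /map_blocks (eq_imset (g := id)) ?imset_id // => B.
by rewrite (eq_imset (g:=id)) ?imset_id.
Qed.

Lemma map_blocks_f (aT rT : finType) (f : aT -> rT) (p : {set {set aT}}) B :
  B \in p -> f @: B \in map_blocks f p.
Proof. by move=> H; apply: imset_f. Qed.

Lemma glue_p k m l (p : ppart m l) (q : ppart k m) C a b :
  C \in p -> a \in C -> b \in C -> glue_rel p q (emb_p k a) (emb_p k b).
Proof.
move=> Cp aC bC; apply/existsP; exists (@emb_p k m l @: C).
rewrite inE /map_blocks (imset_f _ Cp) /=.
by rewrite !imset_f.
Qed.

Lemma glue_q k m l (p : ppart m l) (q : ppart k m) C a b :
  C \in q -> a \in C -> b \in C -> glue_rel p q (emb_q l a) (emb_q l b).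
Proof.
move=> Cq aC bC; apply/existsP; exists (@emb_q k m l @: C).
rewrite inE /map_blocks (imset_f _ Cq) orbT /=.
by rewrite !imset_f.
Qed.

Lemma glue_cases k m l (p : ppart m l) (q : ppart k m) u v :
  glue_rel p q u v ->
  (exists C a b, [/\ C \in p, a \in C, b \in C, u = emb_p k a & v = emb_p k b]) \/
  (exists C a b, [/\ C \in q, a \in C, b \in C, u = emb_q l a & v = emb_q l b]).
Proof.
case/existsP=> B /andP[]; rewrite inE => /orP[]/imsetP[C CP ->]/andP[]
  /imsetP[a aC ->] /imsetP[b bC ->].
  by left; exists C, a, b.
by right; exists C, a, b.
Qed.

Lemma comp_char0 k m l (p : ppart m l) (q : ppart k m) (C : eqType)
  (c : pt3 k m l -> C) :
  (forall u v, glue_rel p q u v -> c u = c v) ->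
  (forall x y, c (emb_out m x) = c (emb_out m y) ->
     connect (glue_rel p q) (emb_out m x) (emb_out m y)) ->
  pcomp p q = [set [set y | c (emb_out m y) == c (emb_out m x)] | x : pt k l].
Proof.
move=> mono conn; apply: eq_imset => x; apply/setP => y; rewrite !inE.
apply/idP/idP => [H|/eqP H]; last by apply: conn.
have cl : closed (glue_rel p q) [pred u | c u == c (emb_out m x)].
  by move=> u v /mono; rewrite !inE => ->.
by move: (closed_connect cl H); rewrite !inE eqxx => <-.
Qed.

Lemma classes_map (V W : finType) (P : {set {set W}}) (phi : V -> W) (g : W -> V) :
  partition P [set: W] -> cancel phi g -> cancel g phi ->
  [set [set y | pblock P (phi y) == pblock P (phi x)] | x : V] = map_blocks g P.
Proof.
case/and3P=> /eqP cov triv nz pg gp.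
have inc w : w \in cover P by rewrite cov inE.
apply/setP=> B; apply/imsetP/imsetP => [[x _ ->]|[C CP ->]].
  exists (pblock P (phi x)); first exact: pblock_mem.
  apply/setP=> y; rewrite inE; apply/idP/imsetP => [H|[w wP ->]].
    exists (phi y); last by rewrite pg.
    by rewrite eq_sym eq_pblock // in H.
  by rewrite gp eq_sym eq_pblock.
have [w wC] : exists w, w \in C.
  by apply/set0Pn; apply: contraNneq nz => <-.
exists (g w) => //; apply/setP => y; rewrite inE gp (def_pblock triv CP wC).
apply/imsetP/idP => [[z zC ->]|H].
  by rewrite gp -(def_pblock triv CP zC) eqxx.
exists (phi y); last by rewrite pg.
by rewrite -(eqP H) mem_pblock inc.
Qed.

Lemma glue_sym k m l (p : ppart m l) (q : ppart k m) : symmetric (glue_rel p q).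
Proof.
by move=> u v; apply/existsP/existsP => -[B /and3P[H1 H2 H3]]; exists B; rewrite H1 H3 H2.
Qed.

Lemma connect_glue_sym k m l (p : ppart m l) (q : ppart k m) u v :
  connect (glue_rel p q) u v -> connect (glue_rel p q) v u.
Proof. by rewrite (sym_connect_sym (glue_sym p q)). Qed.

Lemma glue_p' k m l (p : ppart m l) (q : ppart k m) C a b u v :
  C \in p -> a \in C -> b \in C -> u = emb_p k a -> v = emb_p k b -> glue_rel p q u v.
Proof. by move=> Cp aC bC -> ->; apply: glue_p Cp aC bC. Qed.

Lemma glue_q' k m l (p : ppart m l) (q : ppart k m) C a b u v :
  C \in q -> a \in C -> b \in C -> u = emb_q l a -> v = emb_q l b -> glue_rel p q u v.
Proof. by move=> Cp aC bC -> ->; apply: glue_q Cp aC bC. Qed.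

Lemma tensor_l k l k' l' (p : ppart k l) (q : ppart k' l') C :
  C \in p -> @tens_l k l k' l' @: C \in tensor p q.
Proof. by move=> H; rewrite inE map_blocks_f. Qed.

Lemma tensor_r k l k' l' (p : ppart k l) (q : ppart k' l') C :
  C \in q -> @tens_r k l k' l' @: C \in tensor p q.
Proof. by move=> H; rewrite inE map_blocks_f ?orbT. Qed.

Lemma tensor_cases k l k' l' (p : ppart k l) (q : ppart k' l') C :
  C \in tensor p q ->
  (exists2 D, D \in p & C = @tens_l k l k' l' @: D) \/
  (exists2 D, D \in q & C = @tens_r k l k' l' @: D).
Proof. by rewrite inE => /orP[] /imsetP[D DP ->]; [left|right]; exists D. Qed.


Definition PxT := forall k l : nat, ppart k l -> Prop.

Lemma ppart00 (r : ppart 0 0) : is_part r -> r = set0.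
Proof.
case/and3P=> _ _ nz; apply/setP=> B; rewrite inE.
apply/negbTE; apply: contra nz => BP.
suff E : B = set0 by rewrite -E.
by apply/setP=> -[] [].
Qed.

Lemma Px00 (Px : PxT) (HP : is_category Px) : Px 0 0 set0.
Proof.
have H := cat_comp HP (cat_invol HP (cat_sqcap HP)) (cat_sqcap HP).
suff <- : pcomp (invol sqcap) sqcap = set0 by [].
by apply/setP=> B; rewrite inE; apply/imsetP=> -[] [] [].
Qed.

Definition permpart n (f : 'I_n -> 'I_n) : ppart n n :=
  [set [set (inl i : pt n n); inr (f i)] | i : 'I_n].

Definition fsum a b (f : 'I_a -> 'I_a) (g : 'I_b -> 'I_b) (j : 'I_(a + b)) : 'I_(a + b) :=
  match split j with inl i => lshift b (f i) | inr i => rshift a (g i) end.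

Lemma split_lshift a b (i : 'I_a) : split (lshift b i) = inl i.
Proof. exact: (unsplitK (inl i)). Qed.
Lemma split_rshift a b (i : 'I_b) : split (rshift a i) = inr i.
Proof. exact: (unsplitK (inr i)). Qed.

Lemma permpart_ext n (f g : 'I_n -> 'I_n) : f =1 g -> permpart f = permpart g.
Proof. by move=> fg; apply: eq_imset => i; rewrite fg. Qed.

Lemma tensor_perm a b (f : 'I_a -> 'I_a) (g : 'I_b -> 'I_b) :
  tensor (permpart f) (permpart g) = permpart (fsum f g).
Proof.
rewrite /tensor /permpart /map_blocks -!imset_comp.
apply/setP=> B; rewrite inE; apply/orP/imsetP => [[]|[j _ ->]].
- case/imsetP=> i _ ->; exists (lshift b i) => //=.
  by rewrite imsetU1 imset_set1 /fsum split_lshift.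
- case/imsetP=> i _ ->; exists (rshift a i) => //=.
  by rewrite imsetU1 imset_set1 /fsum split_rshift.
rewrite /fsum; case: (split j) (splitK j) => i <-.
  by left; apply/imsetP; exists i => //=; rewrite imsetU1 imset_set1.
by right; apply/imsetP; exists i => //=; rewrite imsetU1 imset_set1.
Qed.

Lemma idp_perm : idp = permpart id.
Proof.
apply/setP=> B; rewrite inE /permpart; apply/eqP/imsetP => [->|[i _ ->]].
  exists ord0 => //; apply/setP=> -[] x; rewrite !inE (ord1 x) //.
by apply/setP=> -[] x; rewrite !inE (ord1 x) (ord1 i).
Qed.

Lemma permpart0 (f : 'I_0 -> 'I_0) : permpart f = set0.
Proof. by apply/setP=> B; rewrite inE; apply/imsetP=> -[] []. Qed.

Lemma Px_id (Px : PxT) (HP : is_category Px) n : Px n n (permpart id).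
Proof.
elim: n => [|n IH]; first by rewrite permpart0; exact: Px00.
have := cat_tensor HP (cat_id HP) IH.
rewrite idp_perm tensor_perm (permpart_ext (g := id)) // => j.
by rewrite /fsum; case: (split j) (splitK j) => i <-.
Qed.

Lemma cross_perm : cross = permpart (@rev_ord 2).
Proof.
apply/setP=> B; rewrite /cross /permpart !inE; apply/orP/imsetP => [[]/eqP->|[i _ ->]].
- by exists ord0 => //; congr [set _; _]; congr inr; apply: val_inj.
- by exists ord_max => //; congr [set _; _]; congr inr; apply: val_inj.
case: i => -[|[|//]] Hi.
  by left; apply/eqP; congr [set _; _]; [congr inl|congr inr]; apply: val_inj.
by right; apply/eqP; congr [set _; _]; [congr inl|congr inr]; apply: val_inj.
Qed.


Definition pmap0 n (f : {perm 'I_n}) (x : pt 0 n) : pt 0 n :=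
  match x with inl i => inl i | inr j => inr (f j) end.

Lemma comp_perm_state n (f : {perm 'I_n}) (q : ppart 0 n) :
  is_part q -> pcomp (permpart f) q = map_blocks (pmap0 f) q.
Proof.
move=> qP.
pose pi (u : pt3 0 n n) : pt 0 n :=
  match u with inl i => inl i | inr (inl a) => inr a | inr (inr b) => inr ((f^-1)%g b) end.
have triv : trivIset q by case/and3P: qP.
have inc w : w \in cover q by case/and3P: qP => /eqP -> _ _; rewrite inE.
rewrite (comp_char0 (c := fun u => pblock q (pi u))).
- apply: classes_map => //; first by move=> [[]//|j] /=; rewrite permKV.
  by move=> [[]//|j] /=; rewrite permK.
- move=> u v /glue_cases [[C [a [b [CP aC bC -> ->]]]]|[C [a [b [CP aC bC -> ->]]]]].
    case/imsetP: CP aC bC => i _ -> aC bC.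
    suff E : forall z, z \in [set (inl i : pt n n); inr (f i)] -> pi (emb_p 0 z) = inr i.
      by rewrite (E a aC) (E b bC).
    by move=> z; rewrite !inE => /orP[] /eqP -> //=; rewrite permK.
  suff E : forall z, pi (emb_q n z) = z.
    by rewrite !E (def_pblock triv CP aC) (def_pblock triv CP bC).
  by case=> [[]|].
move=> [[]//|b] [[]//|b'] /= H.
have s1 : forall c, connect (glue_rel (permpart f) q) (emb_out n (inr c : pt 0 n))
                             (inr (inl ((f^-1)%g c))).
  move=> c; apply: connect1; rewrite -{1}(permKV f c).
  have CP : [set (inl ((f^-1)%g c) : pt n n); inr (f ((f^-1)%g c))] \in permpart f.
    by apply/imsetP; exists ((f^-1)%g c).
  have a1 : (inr (f ((f^-1)%g c)) : pt n n) \in [set (inl ((f^-1)%g c) : pt n n); inr (f ((f^-1)%g c))].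
    by rewrite !inE eqxx orbT.
  have a2 : (inl ((f^-1)%g c) : pt n n) \in [set (inl ((f^-1)%g c) : pt n n); inr (f ((f^-1)%g c))].
    by rewrite !inE eqxx.
  exact: (glue_p q CP a1 a2).
apply: connect_trans (s1 b) _; apply: connect_glue_sym.
apply: connect_trans (s1 b') _; apply: connect1.
have Cq := pblock_mem (inc (inr ((f^-1)%g b'))).
apply: (glue_q (permpart f) Cq (a := inr ((f^-1)%g b')) (b := inr ((f^-1)%g b))).
  by rewrite mem_pblock.
by rewrite -H mem_pblock.
Qed.


Lemma tperm_val n (x y z : 'I_n) :
  val (tperm x y z) = if val z == val x then val y else if val z == val y then val x else val z.
Proof. by rewrite permE /= !(fun_if val). Qed.

Lemma adj_perm (Px : PxT) (HP : is_category Px) n a b :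
  n = a + 2 + b -> forall x y : 'I_n, val x = a -> val y = a.+1 ->
  Px n n (permpart (tperm x y)).
Proof.
move=> -> x y Ex Ey.
have H := cat_tensor HP (cat_tensor HP (Px_id HP a) (cat_cross HP)) (Px_id HP b).
rewrite cross_perm !tensor_perm in H.
rewrite (permpart_ext (g := fsum (fsum id (@rev_ord 2)) id)) // => z.
apply: val_inj; rewrite tperm_val Ex Ey /fsum.
case: splitP => [w|w] Ez.
  case: splitP => [u|u] Ew /=; rewrite Ez Ew.
    by have := ltn_ord u; (case: ifP => /eqP ?; [lia|]; case: ifP => /eqP ?; lia).
  by have := ltn_ord u; (case: ifP => /eqP ?; [lia|]; case: ifP => /eqP ?; lia).
have Ez' : val z = a + 2 + w := Ez.
by rewrite /=; (case: ifP => /eqP ?; [lia|]; case: ifP => /eqP ?; lia).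
Qed.

Definition good (Px : PxT) n (f : {perm 'I_n}) :=
  forall q, Px 0 n q -> Px 0 n (map_blocks (pmap0 f) q).

Lemma good_permpart (Px : PxT) (HP : is_category Px) n (f : {perm 'I_n}) :
  Px n n (permpart f) -> good Px f.
Proof.
move=> H q Hq; rewrite -comp_perm_state; last exact: (cat_sub HP Hq).
exact: (cat_comp HP H Hq).
Qed.

Lemma good1 (Px : PxT) n : good Px (1%g : {perm 'I_n}).
Proof. by move=> q Hq; rewrite map_blocks_id // => -[] i //=; rewrite perm1. Qed.

Lemma good_mul (Px : PxT) n (f g : {perm 'I_n}) :
  good Px f -> good Px g -> good Px (f * g)%g.
Proof.
move=> gf gg q Hq; rewrite (map_blocks_ext (g := pmap0 g \o pmap0 f)).
  by rewrite map_blocks_comp; apply: gg; apply: gf.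
by case=> i //=; rewrite permM.
Qed.

Lemma good_adj (Px : PxT) (HP : is_category Px) n (x y : 'I_n) :
  (y : nat) = (x : nat).+1 -> good Px (tperm x y).
Proof.
move=> Ey; apply: good_permpart => //.
apply: (adj_perm HP (a := (x : nat)) (b := n - (x : nat).+2)) => //.
have Hy : (y : nat) < n := ltn_ord y; lia.
Qed.

Lemma good_dist (Px : PxT) (HP : is_category Px) n d :
  forall x y : 'I_n, (y : nat) = (x : nat) + d.+1 -> good Px (tperm x y).
Proof.
elim: d => [|d IH] x y Ey; first by apply: (good_adj HP); move: Ey; rewrite addn1.
have Hy : (y : nat) < n := ltn_ord y.
have zn : (x : nat) + d.+1 < n by lia.
pose z := Ordinal zn.
have E : tperm x y = (tperm z y * tperm x z * tperm z y)%g.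
  have -> : (tperm z y * tperm x z * tperm z y)%g = (tperm x z ^ tperm z y)%g.
    by rewrite conjgE tpermV mulgA.
  rewrite tpermJ tpermL tpermD //.
  - by apply/eqP => /(congr1 val) /=; lia.
  - by apply/eqP => /(congr1 val) /=; lia.
have gzy : good Px (tperm z y) by apply: (good_adj HP) => /=; lia.
rewrite E; apply: good_mul => //; apply: good_mul => //.
by apply: IH.
Qed.

Lemma good_tperm (Px : PxT) (HP : is_category Px) n (x y : 'I_n) : good Px (tperm x y).
Proof.
case: (ltngtP (x : nat) (y : nat)) => H.
- by apply: (good_dist HP (d := (y : nat) - (x : nat).+1)); lia.
- by rewrite tpermC; apply: (good_dist HP (d := (x : nat) - (y : nat).+1)); lia.
have -> : x = y by apply: val_inj.
by rewrite tperm1; apply: good1.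
Qed.

Lemma good_all (Px : PxT) (HP : is_category Px) n (f : {perm 'I_n}) : good Px f.
Proof.
case: (prod_tpermP f) => ts -> _; elim: ts => [|t ts IH].
  by rewrite big_nil; apply: good1.
by rewrite big_cons; apply: good_mul => //; apply: good_tperm.
Qed.


Lemma card_pt k l : #|{: pt k l}| = k + l.
Proof. by rewrite /pt card_sum !card_ord. Qed.

Lemma CL0 (Px : PxT) (HP : is_category Px) n n' (q : ppart 0 n) (f : pt 0 n -> pt 0 n') :
  Px 0 n q -> bijective f -> Px 0 n' (map_blocks f q).
Proof.
move=> Hq fb; have := bij_eq_card fb; rewrite !card_pt !add0n => E; subst n'.
have finj := bij_inj fb.
pose s (j : 'I_n) : 'I_n := match f (inr j) with inr j' => j' | inl i => j end.
have sE j : f (inr j) = inr (s j) by rewrite /s; case: (f (inr j)) => [[]|].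
have sinj : injective s by move=> j1 j2 E; apply/(can_inj (g := id)) => //; apply: (@inr_inj _ _); apply: finj; rewrite !sE E.
rewrite (map_blocks_ext (g := pmap0 (perm sinj))); first exact: (good_all HP).
by case=> [[]|j] //=; rewrite permE sE.
Qed.


Definition rotone k l (x : pt k.+1 l) : pt k (1 + l) :=
  match x with
  | inl i => match unlift ord0 i with Some i' => inl i' | None => inr (lshift l ord0) end
  | inr j => inr (rshift 1 j)
  end.

Definition rotinv k l (x : pt k (1 + l)) : pt k.+1 l :=
  match x with
  | inl i => inl (lift ord0 i)
  | inr j => match split j with inl _ => inl ord0 | inr j' => inr j' end
  end.

Lemma rotoneK k l : cancel (@rotone k l) (@rotinv k l).
Proof.
case=> [i|j] /=.
  case: unliftP => [i' ->|->] //=.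
  by rewrite split_lshift.
by rewrite split_rshift.
Qed.

Lemma rotinvK k l : cancel (@rotinv k l) (@rotone k l).
Proof.
case=> [i|j] /=; first by rewrite liftK.
case: (split j) (splitK j) => [i <-|j' <-] //=.
by rewrite unlift_none (ord1 i).
Qed.

Definition piR k l (u : pt3 k (2 + k) (1 + l)) : pt k.+1 l :=
  match u with
  | inl i => inl (lift ord0 i)
  | inr (inl a) => match split a with inl _ => inl ord0 | inr i => inl (lift ord0 i) end
  | inr (inr j) => match split j with inl _ => inl ord0 | inr j' => inr j' end
  end.

Lemma rot1_comp k l (p : ppart k.+1 l) : is_part p ->
  @Defs.comp k (2 + k) (1 + l) (tensor idp p) (tensor sqcap (permpart id)) =
  map_blocks (@rotone k l) p.
Proof.
move=> pP.
have triv : trivIset p by case/and3P: pP.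
have inc w : w \in cover p by case/and3P: pP => /eqP -> _ _; rewrite inE.
rewrite (comp_char0 (c := fun u => pblock p (piR u))).
- apply: classes_map => //.
    move=> y; have -> : piR (emb_out (2 + k) y) = rotinv y by case: y.
    exact: rotinvK.
  move=> y; have -> : piR (emb_out (2 + k) (rotone y)) = rotinv (rotone y) by case: (rotone y).
  exact: rotoneK.
- move=> u v /glue_cases [[C [a [b [CP aC bC -> ->]]]]|[C [a [b [CP aC bC -> ->]]]]].
  + have [[D DP CD]|[D DP CD]] := @tensor_cases 1 1 k.+1 l idp p C CP; subst C.
      suff E : forall z : pt 1 1, piR (emb_p k (tens_l k.+1 l z)) = inl ord0.
        by case/imsetP: aC => a' _ ->; case/imsetP: bC => b' _ ->; rewrite !E.
      by case=> z /=; rewrite (ord1 z); case: splitP => //= j; lia.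
    suff E : forall z : pt k.+1 l, piR (emb_p k (tens_r 1 1 z)) = z.
      case/imsetP: aC => a' a'D ->; case/imsetP: bC => b' b'D ->.
      by rewrite !E (def_pblock triv DP a'D) (def_pblock triv DP b'D).
    case=> [i|j] /=; last by rewrite split_rshift.
    case: splitP => /= w Ew; congr inl; apply: val_inj => /=.
      by have := ltn_ord w; lia.
    rewrite /bump /=; lia.
  + have [[D DP CD]|[D DP CD]] := @tensor_cases 0 2 k k sqcap (permpart id) C CP; subst C.
      suff E : forall z : pt 0 2, piR (emb_q (1 + l) (tens_l k k z)) = inl ord0.
        by case/imsetP: aC => a' _ ->; case/imsetP: bC => b' _ ->; rewrite !E.
      by case=> [[]//|j] /=; rewrite split_lshift.
    case/imsetP: DP => i _ DE; subst D.
    suff E : forall z, z \in [set (inl i : pt k k); inr (id i)] ->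
        piR (emb_q (1 + l) (tens_r 0 2 z)) = inl (lift ord0 i).
      by case/imsetP: aC => a' a'D ->; case/imsetP: bC => b' b'D ->; rewrite !E.
    move=> z; rewrite !inE => /orP[] /eqP -> /=; last by rewrite split_rshift.
    by congr inl; apply: val_inj.
- set G := glue_rel _ _.
  pose sig (d : pt k.+1 l) : pt3 k (2 + k) (1 + l) := emb_p k (tens_r 1 1 d : pt (2 + k) (1 + l)).
  have stepB d d' : pblock p d = pblock p d' -> connect G (sig d) (sig d').
    move=> E; apply: connect1.
    apply: (@glue_p' k (2 + k) (1 + l) (tensor idp p) (tensor sqcap (permpart id)) (@tens_r 1 1 k.+1 l @: pblock p d) (tens_r 1 1 d) (tens_r 1 1 d')) => //.
    - exact: (@tensor_r 1 1 k.+1 l idp p _ (pblock_mem (inc d))).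
    - by rewrite imset_f // mem_pblock.
    - by rewrite imset_f // E mem_pblock.
  have sqT : [set: pt 0 2] \in sqcap by rewrite inE.
  have idT : [set: pt 1 1] \in idp by rewrite inE.
  have stepA x : connect G (emb_out (2 + k) x) (sig (piR (emb_out (2 + k) x))).
    case: x => [i|j].
      apply: connect1.
      have Ci : [set (inl i : pt k k); inr (id i)] \in permpart id by apply: imset_f.
      apply: (@glue_q' k (2 + k) (1 + l) (tensor idp p) (tensor sqcap (permpart id)) (@tens_r 0 2 k k @: [set (inl i : pt k k); inr (id i)]) (tens_r 0 2 (inl i)) (tens_r 0 2 (inr i))).
      - exact: (@tensor_r 0 2 k k sqcap (permpart id) _ Ci).
      - by rewrite imset_f // !inE eqxx.
      - by rewrite imset_f // !inE eqxx orbT.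
      - by rewrite /=; congr inl; apply: val_inj.
      - by rewrite /=; congr (inr (inl _)); apply: val_inj => /=; rewrite /bump /=; lia.
    case: (split j) (splitK j) => [z <-|j' <-] /=; last by rewrite split_rshift.
    rewrite split_lshift (ord1 z).
    apply: (connect_trans (y := inr (inl (lshift k (ord0 : 'I_2))))); apply: connect1.
      apply: (@glue_p' k (2 + k) (1 + l) (tensor idp p) (tensor sqcap (permpart id)) (@tens_l 1 1 k.+1 l @: [set: pt 1 1]) (@tens_l 1 1 k.+1 l (inr ord0)) (@tens_l 1 1 k.+1 l (inl ord0))).
      - exact: (@tensor_l 1 1 k.+1 l idp p _ idT).
      - by rewrite imset_f.
      - by rewrite imset_f.
      - by [].
      - by rewrite /=; congr (inr (inl _)); apply: val_inj.
    apply: (@glue_q' k (2 + k) (1 + l) (tensor idp p) (tensor sqcap (permpart id)) (@tens_l 0 2 k k @: [set: pt 0 2]) (@tens_l 0 2 k k (inr ord0)) (@tens_l 0 2 k k (inr ord_max))).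
    - exact: (@tensor_l 0 2 k k sqcap (permpart id) _ sqT).
    - by rewrite imset_f.
    - by rewrite imset_f.
    - by [].
    - by rewrite /=; congr (inr (inl _)); apply: val_inj.
  move=> x y E.
  apply: connect_trans (stepA x) _; apply: connect_trans (stepB _ _ E) _.
  exact: connect_glue_sym (stepA y).
Qed.


Lemma rot1 (Px : PxT) (HP : is_category Px) k l (p : ppart k.+1 l) :
  Px k.+1 l p -> Px k (1 + l) (map_blocks (@rotone k l) p).
Proof.
move=> Hp; rewrite -rot1_comp; last exact: (cat_sub HP Hp).
have H1 : Px (2 + k) (1 + l) (tensor idp p) := cat_tensor HP (cat_id HP) Hp.
have H2 : Px k (2 + k) (tensor sqcap (permpart id)) := cat_tensor HP (cat_sqcap HP) (Px_id HP k).
exact: (cat_comp HP H1 H2).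
Qed.

Lemma CLrot (Px : PxT) (HP : is_category Px) n k :
  forall l (p : ppart k l) (f : pt k l -> pt 0 n),
  Px k l p -> bijective f -> Px 0 n (map_blocks f p).
Proof.
elim: k => [|k IH] l p f Hp fb; first exact: (CL0 HP Hp fb).
have H := rot1 HP Hp.
have fb' : bijective (f \o @rotinv k l).
  apply: bij_comp fb _; exists (@rotone k l); [exact: rotinvK | exact: rotoneK].
have := IH _ _ _ H fb'; rewrite -map_blocks_comp.
by rewrite (map_blocks_ext (g := f)) // => x /=; rewrite rotoneK.
Qed.

Definition unrot k l (x : pt k l.+1) : pt (1 + k) l :=
  swap_pt (rotone (swap_pt x)).
Definition unrotinv k l (x : pt (1 + k) l) : pt k l.+1 :=
  swap_pt (@rotinv l k (swap_pt x)).

Lemma swap_ptK k l : cancel (@swap_pt k l) (@swap_pt l k).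
Proof. by case. Qed.

Lemma unrotK k l : cancel (@unrot k l) (@unrotinv k l).
Proof. by move=> x; rewrite /unrot /unrotinv swap_ptK rotoneK swap_ptK. Qed.
Lemma unrotinvK k l : cancel (@unrotinv k l) (@unrot k l).
Proof. by move=> x; rewrite /unrot /unrotinv swap_ptK rotinvK swap_ptK. Qed.

Lemma unrot1 (Px : PxT) (HP : is_category Px) k l (p : ppart k l.+1) :
  Px k l.+1 p -> Px (1 + k) l (map_blocks (@unrot k l) p).
Proof.
move=> Hp; have := cat_invol HP (rot1 HP (cat_invol HP Hp)).
by rewrite /invol -!map_blocks_comp.
Qed.

Lemma CLunrot (Px : PxT) (HP : is_category Px) n k :
  forall l (q : ppart 0 n) (g : pt 0 n -> pt k l),
  Px 0 n q -> bijective g -> Px k l (map_blocks g q).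
Proof.
elim: k => [|k IH] l q g Hq gb; first exact: (CL0 HP Hq gb).
have gb' : bijective (@unrotinv k l \o g).
  apply: bij_comp gb; exists (@unrot k l); [exact: unrotinvK | exact: unrotK].
have := unrot1 HP (IH _ _ _ Hq gb'); rewrite -map_blocks_comp.
by rewrite (map_blocks_ext (g := g)) // => x /=; rewrite unrotinvK.
Qed.

Lemma rot_pt_bij k l : bijective (@rot_pt k l).
Proof.
apply: inj_card_bij; last by rewrite !card_pt.
move=> [i|j] [i'|j'] /= [] E; move: E.
- by move=> E; congr inl; apply: val_inj => /=; have := ltn_ord i; have := ltn_ord i'; lia.
- by have := ltn_ord i; lia.
- by have := ltn_ord i'; lia.
- by move=> E; congr inr; apply: val_inj => /=; lia.
Qed.

Lemma CL (Px : PxT) (HP : is_category Px) k l k' l' (p : ppart k l) (f : pt k l -> pt k' l') :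
  Px k l p -> bijective f -> Px k' l' (map_blocks f p).
Proof.
move=> Hp fb.
have H := CLrot HP Hp (rot_pt_bij k l).
case: (rot_pt_bij k l) => r rK Kr.
have gb : bijective (f \o r).
  apply: bij_comp fb _; exists (@rot_pt k l) => //.
have := CLunrot HP H gb; rewrite -map_blocks_comp.
by rewrite (map_blocks_ext (g := f)) // => x /=; rewrite rK.
Qed.


Definition eB (T : finType) (B : {set T}) (i : 'I_#|B|) : T := @enum_val _ (mem B) i.
Arguments eB [T] B i.

Lemma eB_in (T : finType) (B : {set T}) i : eB B i \in B.
Proof. exact: (@enum_valP _ (mem B)). Qed.

Lemma eB_inj (T : finType) (B : {set T}) : injective (eB B).
Proof. exact: (@enum_val_inj _ (mem B)). Qed.

Lemma eB_onto (T : finType) (B : {set T}) x : x \in B -> exists i, x = eB B i.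
Proof.
move=> xB; exists (enum_rank_in xB x); rewrite /eB.
by rewrite (enum_rankK_in xB xB).
Qed.

Lemma build (Px : PxT) (HP : is_category Px) (T : finType) r :
  forall (p : {set {set T}}) (A : {set T}), #|p| = r -> partition p A ->
  (forall B, B \in p -> Px 0 #|B| (one_s #|B|)) ->
  exists n (s : ppart 0 n) (f : pt 0 n -> T),
    [/\ Px 0 n s, injective f, f @: setT = A & map_blocks f s = p].
Proof.
elim: r => [|r IH] p A cp pA Hp.
  have p0 : p = set0 by apply/cards0_eq.
  have A0 : A = set0 by case/and3P: pA => /eqP <- _ _; rewrite p0 /cover big_set0.
  have f : pt 0 0 -> T by case=> -[m H]; move: H; rewrite ltn0.
  exists 0, set0, f; split.
  - exact: Px00.
  - by case=> -[].
  - by rewrite A0; apply/setP=> x; rewrite inE; apply/imsetP => -[] [] [].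
  - by rewrite p0 /map_blocks imset0.
have [B BP] : exists B, B \in p by apply/set0Pn; rewrite -card_gt0 cp.
have pA' := partitionD1 pA BP.
have cp' : #|p :\ B| = r by move: (cardsD1 B p); rewrite BP cp add1n => -[].
have Hp' C : C \in p :\ B -> Px 0 #|C| (one_s #|C|).
  by rewrite inE => /andP[_ /Hp].
have [n [s [f [Hs finj fim fs]]]] := IH _ _ cp' pA' Hp'.
have BA : B \subset A by case/and3P: pA => /eqP <- _ _; apply: bigcup_sup.
pose g (x : pt 0 (n + #|B|)) : T :=
  match x with
  | inl i => f (inl i)
  | inr j => match split j with inl i => f (inr i) | inr i => eB B i end
  end.
have gl : g \o @tens_l 0 n 0 #|B| =1 f by case=> [[]|i] //=; rewrite split_lshift.
have gr x : (g \o @tens_r 0 n 0 #|B|) x \in B.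
  by case: x => [[]|i] //=; rewrite split_rshift eB_in.
have fnB x : f x \notin B.
  have : f x \in A :\: B by rewrite -fim imset_f.
  by rewrite inE => /andP[].
exists (n + #|B|), (tensor s (one_s #|B|)), g; split.
- exact: (cat_tensor HP Hs (Hp B BP)).
- case=> [[]//|j] [[]//|j'] /=.
  case: (split j) (splitK j) => i <-; case: (split j') (splitK j') => i' <- E.
  + by have := finj _ _ E => -[->].
  + by have := fnB (inr i); rewrite E eB_in.
  + by have := fnB (inr i'); rewrite -E eB_in.
  + by rewrite (eB_inj E).
- apply/setP=> x; apply/imsetP/idP => [[y _ ->]|xA].
    case: y => [[]//|j] /=; case: (split j) => i.
      have : f (inr i) \in A :\: B by rewrite -fim imset_f.
      by rewrite inE => /andP[].
    by apply: (subsetP BA); apply: eB_in.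
  case: (boolP (x \in B)) => xB.
    have [i ->] := eB_onto xB.
    exists (inr (rshift n i)); first exact: in_setT.
    by rewrite /= split_rshift.
  have : x \in A :\: B by rewrite inE xB xA.
  rewrite -fim => /imsetP[[[]//|i] _ ->].
  exists (inr (lshift #|B| i)); first exact: in_setT.
  by rewrite /= split_lshift.
- have -> : map_blocks g (tensor s (one_s #|B|)) =
           map_blocks (g \o @tens_l 0 n 0 #|B|) s :|: map_blocks (g \o @tens_r 0 n 0 #|B|) (one_s #|B|).
    by rewrite !map_blocks_comp /tensor /map_blocks imsetU.
  rewrite (map_blocks_ext _ gl) fs /map_blocks /one_s imset_set1.
  have -> : [set (g \o @tens_r 0 n 0 #|B|) x | x in [set: pt 0 #|B|]] = B.
    apply/setP=> x; apply/imsetP/idP => [[y _ ->]|xB]; first exact: gr.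
    have [i ->] := eB_onto xB; exists (inr i); first exact: in_setT.
    by rewrite /= split_rshift.
  by rewrite setUC setD1K.
Qed.


Lemma part3 (Px : PxT) (HP : is_category Px) k l (p : ppart k l) :
  is_part p -> (forall B, B \in p -> Px 0 #|B| (one_s #|B|)) -> Px k l p.
Proof.
move=> pP Hp.
have [n [s [f [Hs finj fim fs]]]] := build HP (erefl #|p|) pP Hp.
have fb : bijective f.
  apply: (inj_card_bij finj).
  have : #|[set: pt k l]| = #|[set: pt 0 n]|.
    by case/and3P: pP => /eqP cov _ _; rewrite -fim card_imset.
  by rewrite !cardsT => ->.
by rewrite -fs; apply: CL fb.
Qed.

Lemma part1 (Px : PxT) (HP : is_category Px) k l (p : ppart k l) :
  Px k l p -> Px 0 (k + l) (bar p).
Proof. by move=> Hp; apply: CLrot Hp (rot_pt_bij k l). Qed.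

Lemma pairs (Px : PxT) (HP : is_category Px) j : exists q, Px 0 (j.*2) q.
Proof.
elim: j => [|j [q Hq]]; first by exists set0; apply: Px00.
by exists (tensor sqcap q); apply: (cat_tensor HP (cat_sqcap HP) Hq).
Qed.

Definition cJ l (J : {set 'I_l}) (x : pt 0 l) : bool :=
  match x with inl _ => false | inr j => j \in J end.

Lemma capoff m l (p : ppart m l) (q : ppart 0 m) (J : {set 'I_l}) B :
  is_part p -> B \in p ->
  (forall x, (x \in B) = (match x with inl _ => false | inr j => j \in J end)) ->
  (forall j j', j \notin J -> j' \notin J -> j = j') ->
  pcomp p q = [set [set y | cJ J y == cJ J x] | x : pt 0 l].
Proof.
move=> pP BP BE Juniq.
have triv : trivIset p by case/and3P: pP.
pose c (u : pt3 0 m l) : bool := match u with inr (inr j) => j \in J | _ => false end.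
rewrite (comp_char0 (c := c)).
- by apply: eq_imset => x; apply/setP => y; rewrite !inE; case: x => [[]|]; case: y => [[]|].
- move=> u v /glue_cases [[C [a [b [CP aC bC -> ->]]]]|[C [a [b [CP aC bC -> ->]]]]].
    have E z : z \in C -> c (emb_p 0 z) = (C == B).
      move=> zC; have -> : c (emb_p 0 z) = (z \in B) by rewrite BE; case: z {zC}.
      apply/idP/eqP => [zB|E]; last by rewrite -E.
      by rewrite -(def_pblock triv CP zC) (def_pblock triv BP zB).
    by rewrite (E a aC) (E b bC).
  by case: a {aC} => [[]|]; case: b {bC} => [[]|].
move=> [[]//|j] [[]//|j'] /=.
case: (boolP (j \in J)) => jJ; case: (boolP (j' \in J)) => j'J // _.
  apply: connect1; apply: (glue_p q BP (a := inr j) (b := inr j')); by rewrite BE.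
by rewrite (Juniq _ _ jJ j'J) connect0.
Qed.

Definition isr m s (x : pt m s) : bool := if x is inr _ then true else false.

Lemma even_q (Px : PxT) (HP : is_category Px) m : ~~ odd m -> exists q, Px 0 m q.
Proof.
move=> om; have : exists q, Px 0 (odd m + (m./2).*2) q.
  by rewrite (negbTE om) add0n; apply: pairs.
by rewrite odd_double_half.
Qed.

Lemma part2core (Px : PxT) (HP : is_category Px) m s (p : ppart m s) :
  Px m s p -> [set x | isr x] \in p ->
  Px 0 s (one_s s) \/ Px (0 + 0) (1 + s) (tensor uparrow (one_s s)).
Proof.
move=> Hp BP; have pP := cat_sub HP Hp.
have [j0 _] : exists j0 : 'I_s, true.
  have nz : set0 \notin p by case/and3P: pP.
  have : [set x : pt m s | isr x] != set0 by apply: contraNneq nz => <-.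
  by case/set0Pn => -[i|j]; rewrite inE //= => _; exists j.
case: (boolP (odd m)) => om; last first.
  left; have [q Hq] := even_q HP om.
  have := cat_comp HP Hp Hq.
  have BE : forall x : pt m s, (x \in [set x0 | isr x0]) =
      match x with inl _ => false | inr j => j \in [set: 'I_s] end.
    by case=> i; rewrite !inE.
  have Ju : forall j j' : 'I_s, j \notin setT -> j' \notin setT -> j = j'.
    by move=> j j'; rewrite !inE.
  rewrite (capoff q pP BP BE Ju).
  suff -> : [set [set y | cJ [set: 'I_s] y == cJ [set: 'I_s] x] | x : pt 0 s] = one_s s by [].
  apply/setP=> Z; rewrite /one_s inE; apply/imsetP/eqP => [[x _ ->]|->].
    by apply/setP=> y; rewrite !inE; case: x => [[]|]; case: y => [[]|] //= *; rewrite !inE.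
  by exists (inr j0) => //; apply/setP=> y; rewrite !inE; case: y => [[]|] //= *; rewrite !inE eqxx.
right; case: m om p Hp BP pP => // m' om p Hp BP pP.
have [q Hq] := even_q HP om.
have Hp' := rot1 HP Hp.
have := cat_comp HP Hp' Hq.
pose J := [set j : 'I_(1 + s) | 0 < j].
have BP' : @rotone m' s @: [set x | isr x] \in map_blocks (@rotone m' s) p by apply: map_blocks_f.
rewrite (capoff q (J := J) (cat_sub HP Hp') BP') //; first last.
- move=> j j'; rewrite !inE -!leqNgt !leqn0 => /eqP j0' /eqP j0''.
  by apply: val_inj => /=; lia.
- move=> x; apply/imsetP/idP => [[y yB ->]|H].
    case: y yB => [i|j]; rewrite inE //= => _; rewrite inE /=.
    by rewrite /bump /=.
  exists (rotinv x); last by rewrite rotinvK.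
  rewrite inE; case: x H => [//|j] /=; rewrite inE.
  by case: splitP => z Ez //=; rewrite Ez; have := ltn_ord z; lia.
set L := @tens_l 0 1 0 s @: [set: pt 0 1].
set R := @tens_r 0 1 0 s @: [set: pt 0 s].
have HL y : (y \in L) = ~~ cJ J y.
  case: y => [[]//|j] /=; rewrite inE -leqNgt leqn0.
  apply/imsetP/idP => [[[[]//|z] _ [->]] /=|/eqP j0']; first by rewrite (ord1 z).
  exists (inr ord0) => //; congr inr; apply: val_inj => /=; lia.
have HR y : (y \in R) = cJ J y.
  case: y => [[]//|j] /=; rewrite inE.
  apply/imsetP/idP => [[[[]//|z] _ [->]] /=|jpos] //.
  have jz : j - 1 < s by have := ltn_ord j; lia.
  exists (inr (Ordinal jz)) => //; congr inr; apply: val_inj => /=; lia.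
suff -> : [set [set y | cJ J y == cJ J x] | x : pt 0 (1 + s)] = tensor uparrow (one_s s) by [].
have -> : tensor uparrow (one_s s) = [set L; R].
  by rewrite /tensor /map_blocks /one_s /uparrow !imset_set1.
apply/setP => Z; rewrite !inE; apply/imsetP/orP => [[x _ ->]|[] /eqP ->].
- case: (boolP (cJ J x)) => cx.
    by right; apply/eqP/setP => y; rewrite inE HR; case: (cJ J y).
  by left; apply/eqP/setP => y; rewrite inE HL; case: (cJ J y).
- exists (inr ord0) => //; apply/setP => y; rewrite inE HL /= inE ltnn.
  by case: (cJ J y).
- have j1 : 1 < 1 + s by have := ltn_ord j0; lia.
  exists (inr (Ordinal j1)) => //; apply/setP => y; rewrite inE HR /= inE.
  by case: (cJ J y).
Qed.

Lemma part2 (Px : PxT) (HP : is_category Px) k l (p : ppart k l) (B : {set pt k l}) :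
  Px k l p -> B \in p ->
  Px 0 #|B| (one_s #|B|) \/ Px (0 + 0) (1 + #|B|) (tensor uparrow (one_s #|B|)).
Proof.
move=> Hp BP.
pose h (x : pt #|~: B| #|B|) : pt k l :=
  match x with inl i => eB (~: B) i | inr j => eB B j end.
have hinj : injective h.
  move=> [i|j] [i'|j'] /= E.
  - by rewrite (eB_inj E).
  - by have := @eB_in _ (~: B) i; rewrite E inE eB_in.
  - by have := @eB_in _ (~: B) i'; rewrite -E inE eB_in.
  - by rewrite (eB_inj E).
have hb : bijective h.
  apply: (inj_card_bij hinj); have := cardsC B; rewrite !card_pt => <-.
  by rewrite addnC.
case: hb => hi hK Kh.
have hib : bijective hi by exists h.
have Hp' := CL HP Hp hib.
have BP' : hi @: B \in map_blocks hi p by apply: map_blocks_f.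
have E : hi @: B = [set x | isr x].
  apply/setP => x; rewrite inE; apply/imsetP/idP => [[b bB ->]|H].
    move: bB; rewrite -{1}(Kh b); case: (hi b) => [i|j] //=.
    by have := @eB_in _ (~: B) i; rewrite inE => /negbTE ->.
  exists (h x); last by rewrite hK.
  by case: x H => [//|j] _ /=; rewrite eB_in.
rewrite E in BP'.
exact: (part2core HP Hp' BP').
Qed.


Theorem lemma2p7 (Px : forall k l : nat, ppart k l -> Prop) :
  is_category Px ->
  (forall k l (p : ppart k l), Px k l p -> Px 0 (k + l) (bar p)) /\
  (forall k l (p : ppart k l) (B : {set pt k l}), Px k l p -> B \in p ->
     Px 0 #|B| (one_s #|B|) \/ Px (0 + 0) (1 + #|B|) (tensor uparrow (one_s #|B|))) /\
  (forall k l (p : ppart k l), is_part p ->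
     (forall B, B \in p -> Px 0 #|B| (one_s #|B|)) -> Px k l p).
Proof.
move=> HP; split; [|split].
- by move=> k l p Hp; apply: part1 HP _ _ _ Hp.
- by move=> k l p B Hp BP; apply: part2 HP _ _ _ _ Hp BP.
- by move=> k l p pP Hp; apply: part3 HP _ _ _ pP Hp.
Qed.
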